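(* Let $q$ be a power of $2$. In $\mathrm{AG}(3,q^2)$ with affine coordinates $x,y,z$ and plane at infinity $\Sigma_\infty$, let $\mathcal H$ be the Hermitian surface $z^q+z=x^{q+1}+y^{q+1}$ and let $\mathcal Q$ be a hyperbolic quadric with affine equation $z=ax^2+by^2+cxy+dx+ey+f$, $a,\dots,f\in\mathrm{GF}(q^2)$, such that $\mathcal C_\infty=\mathcal Q\cap\mathcal H\cap\Sigma_\infty$ is the union of two lines. Let $\Xi_\infty$ be the quadric of $\mathrm{PG}(3,q)$ defined below. If $\Xi_\infty$ has rank $2$, then $\Xi_\infty$ is the union of two planes $\Pi_1\cup\Pi_2$ both defined over $\mathrm{GF}(q)$.
   Context: Fix $\nu\in\mathrm{GF}(q)\setminus\{1\}$ with absolute trace $\mathrm{Tr}_q(\nu)=\nu+\nu^2+\dots+\nu^{q/2}=1$, and $\varepsilon\in\mathrm{GF}(q^2)\setminus\mathrm{GF}(q)$ with $\varepsilon^2+\varepsilon+\nu=0$. Write each $t\in\mathrm{GF}(q^2)$ as $t=t_0+t_1\varepsilon$ with $t_0,t_1\in\mathrm{GF}(q)$ (so $a=a_0+a_1\varepsilon$, $b=b_0+b_1\varepsilon$, $c=c_0+c_1\varepsilon$, etc.). $\Xi_\infty$ is the quadric of $\mathrm{PG}(3,q)$ in coordinates $(x_0,x_1,y_0,y_1)$ with equation $(a_1+1)x_0^2+x_0x_1+[a_0+(1+\nu)a_1+\nu]x_1^2+(b_1+1)y_0^2+y_0y_1+[b_0+(1+\nu)b_1+\nu]y_1^2+c_1x_0y_0+(c_0+c_1)x_0y_1+(c_0+c_1)x_1y_0+[c_0+(1+\nu)c_1]x_1y_1=0.$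 The rank of a quadric is the minimum number of indeterminates appearing in an equation for it under projective changes of coordinates. *)

(* Defs.v *)
From HB Require Import structures.
From mathcomp Require Import all_boot all_order all_algebra.
Set Implicit Arguments. Unset Strict Implicit. Unset Printing Implicit Defensive.
Import Order.TTheory GRing.Theory.
Local Open Scope ring_scope.

Definition abs_trace (F : nzRingType) (h : nat) (x : F) : F :=
  \sum_(i < h) x ^+ (2 ^ i).

(* A quadratic form in n variables is represented by a matrix A, with
   Q(v) = v A v^T = sum_(i,j) A i j v_i v_j.  Its polynomial coefficients
   (coefficient of v_i v_j for i <= j) are given by qf_coef A. *)
Definition qf_coef (R : comNzRingType) (n : nat) (A : 'M[R]_n) : 'M[R]_n :=
  \matrix_(i, j) (if i == j then A i i
                  else if (i < j)%N then A i j + A j i else 0).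

(* Projective change of coordinates v = w M transforms A into M A M^T. *)
Definition qf_change (R : comNzRingType) (n : nat) (M A : 'M[R]_n) : 'M[R]_n :=
  M *m A *m M^T.

Definition qf_nvars (R : comNzRingType) (n : nat) (A : 'M[R]_n) : nat :=
  #|[set k : 'I_n | [exists i : 'I_n, exists j : 'I_n,
        ((i == k) || (j == k)) && (qf_coef A i j != 0)]]|.

Definition qf_rank (R : comUnitRingType) (n : nat) (A : 'M[R]_n) (r : nat) : Prop :=
  (exists2 M : 'M[R]_n, M \in unitmx & qf_nvars (qf_change M A) = r) /\
  (forall M : 'M[R]_n, M \in unitmx -> (r <= qf_nvars (qf_change M A))%N).

Definition hyp_canon (R : nzRingType) : 'M[R]_4 :=
  \matrix_(i, j) (if ((i == 0 :> nat) && (j == 1 :> nat)) ||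
                     ((i == 2 :> nat) && (j == 3 :> nat)) then 1 else 0).

Definition qf_hyperbolic (R : comUnitRingType) (A : 'M[R]_4) : Prop :=
  exists2 M : 'M[R]_4, M \in unitmx &
    exists2 lam : R, lam != 0 &
      qf_coef (qf_change M A) = lam *: qf_coef (hyp_canon R).

(* Coordinates (x, y, z, t) of PG(3,q^2) are indices 0,1,2,3; t = 0 is the
   plane at infinity.  Homogenized equation of Q:
   a x^2 + b y^2 + c x y + d x t + e y t + f t^2 - z t = 0. *)
Definition Qmat (L : nzRingType) (a b c d e f : L) : 'M[L]_4 :=
  \matrix_(i, j)
    match nat_of_ord i, nat_of_ord j with
    | 0, 0 => a | 1, 1 => b | 0, 1 => c | 0, 3 => d | 1, 3 => e
    | 3, 3 => f | 2, 3 => -1 | _, _ => 0 end.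

Definition Qform (L : comNzRingType) (a b c d e f : L) (v : 'rV[L]_4) : L :=
  (v *m Qmat a b c d e f *m v^T) 0 0.

Definition Hform (L : nzRingType) (q : nat) (v : 'rV[L]_4) : L :=
  let x := v 0 0 in let y := v 0 1 in let z := v 0 2 in let t := v 0 3 in
  z ^+ q * t + z * t ^+ q - (x ^+ q.+1 + y ^+ q.+1).

Definition Cinf (L : comNzRingType) (q : nat) (a b c d e f : L)
  (v : 'rV[L]_4) : Prop :=
  [/\ v != 0, v 0 3 = 0, Qform a b c d e f v = 0 & Hform q v = 0].

Definition union_two_lines (K : fieldType) (S : 'rV[K]_4 -> Prop) : Prop :=
  exists U1 U2 : 'M[K]_(2, 4),
    [/\ \rank U1 = 2%N, \rank U2 = 2%N, ~~ (U1 == U2)%MS &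
      forall v : 'rV[K]_4, v != 0 -> (S v <-> ((v <= U1)%MS \/ (v <= U2)%MS))].

(* The quadric Xi_inf of PG(3,q), coordinates (x0,x1,y0,y1) = indices 0..3. *)
Definition Xi_mat (F : nzRingType) (nu a0 a1 b0 b1 c0 c1 : F) : 'M[F]_4 :=
  \matrix_(i, j)
    match nat_of_ord i, nat_of_ord j with
    | 0, 0 => a1 + 1
    | 0, 1 => 1
    | 1, 1 => a0 + (1 + nu) * a1 + nu
    | 2, 2 => b1 + 1
    | 2, 3 => 1
    | 3, 3 => b0 + (1 + nu) * b1 + nu
    | 0, 2 => c1
    | 0, 3 => c0 + c1
    | 1, 2 => c0 + c1
    | 1, 3 => c0 + (1 + nu) * c1
    | _, _ => 0 end.

Definition qf_two_planes (K : fieldType) (A : 'M[K]_4) : Prop :=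
  exists l1 l2 : 'rV[K]_4,
    \rank (col_mx l1 l2) = 2%N /\ qf_coef A = qf_coef (l1^T *m l2).

(* Main.v *)
Require Import Defs.
From HB Require Import structures.
From mathcomp Require Import all_boot all_order all_algebra.
From mathcomp Require Import all_field.
From mathcomp Require Import ring zify.
From Stdlib Require Import Classical.
Import GRing.Theory.
Local Open Scope ring_scope.

Module Aux.
Set Implicit Arguments. Unset Strict Implicit.

Definition bil (R : comNzRingType) n (A : 'M[R]_n) (u w : 'rV[R]_n) : R := (u *m A *m w^T) 0 0.
Definition Qf (R : comNzRingType) n (A : 'M[R]_n) (v : 'rV[R]_n) : R := bil A v v.

Lemma QfE (R : comNzRingType) n (A : 'M[R]_n) v : Qf A v = \sum_(i < n) \sum_(j < n) A i j * v 0 i * v 0 j.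
Proof.
rewrite /Qf /bil mxE.
under eq_bigr => j _ do rewrite !mxE big_distrl /=.
rewrite exchange_big /=; apply: eq_bigr => i _; apply: eq_bigr => j _.
ring.
Qed.

Lemma Qf_coef (R : comNzRingType) (A : 'M[R]_4) v : Qf A v = \sum_(i < 4) \sum_(j < 4) qf_coef A i j * v 0 i * v 0 j.
Proof.
rewrite QfE /qf_coef !big_ord_recr !big_ord0 /= !mxE /=.
ring.
Qed.

Lemma bilDl (R : comNzRingType) n (A : 'M[R]_n) u u' w : bil A (u + u') w = bil A u w + bil A u' w.
Proof. by rewrite /bil !mulmxDl mxE. Qed.
Lemma bilDr (R : comNzRingType) n (A : 'M[R]_n) u w w' : bil A u (w + w') = bil A u w + bil A u w'.
Proof. by rewrite /bil linearD /= mulmxDr mxE. Qed.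
Lemma bilZl (R : comNzRingType) n (A : 'M[R]_n) x u w : bil A (x *: u) w = x * bil A u w.
Proof. by rewrite /bil -!scalemxAl mxE. Qed.
Lemma bilZr (R : comNzRingType) n (A : 'M[R]_n) x u w : bil A u (x *: w) = x * bil A u w.
Proof. by rewrite /bil linearZ /= -!scalemxAr mxE. Qed.

Lemma Qf_add (R : comNzRingType) n (A : 'M[R]_n) u w :
  Qf A (u + w) = Qf A u + Qf A w + (bil A u w + bil A w u).
Proof. rewrite /Qf bilDl !bilDr; ring. Qed.

Lemma Qf_lin (R : comNzRingType) n (A : 'M[R]_n) x y u w :
  Qf A (x *: u + y *: w) = Qf A u * x ^+ 2 + (bil A u w + bil A w u) * x * y + Qf A w * y ^+ 2.
Proof. rewrite Qf_add /Qf !bilZl !bilZr; ring. Qed.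

Lemma bil_delta (R : comNzRingType) n (A : 'M[R]_n) i j :
  bil A (delta_mx 0 i) (delta_mx 0 j) = A i j.
Proof.
by rewrite /bil -rowE trmx_delta -colE !mxE.
Qed.

Lemma coef_det (R : comNzRingType) n (A B : 'M[R]_n) :
  (forall v, Qf A v = Qf B v) -> qf_coef A = qf_coef B.
Proof.
move=> H; apply/matrixP => i j; rewrite !mxE.
have hd k : A k k = B k k by have := H (delta_mx 0 k); rewrite /Qf !bil_delta.
case: eqP => [->|ij]; first exact: hd.
case: ifP => // _.
have := H (delta_mx 0 i + delta_mx 0 j).
by rewrite !Qf_add /Qf !bil_delta hd (hd j) => /addrI.
Qed.

Lemma two_opp (R : comNzRingType) (two0 : (2:R) = 0) (x : R) : - x = x.
Proof. have: x = - x + 2 * x by ring. by rewrite two0 mul0r addr0 => <-. Qed.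

Lemma frobD (R : comNzRingType) (two0 : (2:R) = 0) h (x y : R) :
  (x + y) ^+ (2 ^ h) = x ^+ (2 ^ h) + y ^+ (2 ^ h).
Proof.
elim: h => [|h IH]; first by rewrite !expn0 !expr1.
rewrite expnS mulnC !exprM IH.
have E: (x ^+ (2 ^ h) + y ^+ (2 ^ h)) ^+ 2 = (x ^+ (2 ^ h)) ^+ 2 + (y ^+ (2 ^ h)) ^+ 2 + 2 * (x ^+ (2 ^ h) * y ^+ (2 ^ h)) by ring.
by rewrite E two0 mul0r addr0.
Qed.

Definition o0 : 'I_4 := @Ordinal 4 0 isT.
Definition o1 : 'I_4 := @Ordinal 4 1 isT.
Definition o2 : 'I_4 := @Ordinal 4 2 isT.
Definition o3 : 'I_4 := @Ordinal 4 3 isT.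

Definition vec4 (R : nzRingType) (x0 x1 x2 x3 : R) : 'rV[R]_4 :=
  \row_(i < 4) nth 0 [:: x0; x1; x2; x3] i.

Lemma vec4E (R : nzRingType) (v : 'rV[R]_4) : v = vec4 (v 0 o0) (v 0 o1) (v 0 o2) (v 0 o3).
Proof.
apply/rowP => i; rewrite mxE; case: i => [[|[|[|[|//]]]] Hi] /=; congr (v 0 _); exact: val_inj.
Qed.

Lemma vec4_lin (R : nzRingType) (a b x0 x1 x2 x3 y0 y1 y2 y3 : R) :
  a *: vec4 x0 x1 x2 x3 + b *: vec4 y0 y1 y2 y3 = vec4 (a * x0 + b * y0) (a * x1 + b * y1) (a * x2 + b * y2) (a * x3 + b * y3).
Proof. by apply/rowP => i; rewrite !mxE; case: i => [[|[|[|[|//]]]] Hi]. Qed.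

Lemma vec4D (R : nzRingType) (x0 x1 x2 x3 y0 y1 y2 y3 : R) :
  vec4 x0 x1 x2 x3 + vec4 y0 y1 y2 y3 = vec4 (x0 + y0) (x1 + y1) (x2 + y2) (x3 + y3).
Proof. by apply/rowP => i; rewrite !mxE; case: i => [[|[|[|[|//]]]] Hi]. Qed.

Lemma vec4_0 (R : nzRingType) (x0 x1 x2 x3 : R) : vec4 x0 x1 x2 x3 0 o0 = x0 /\ vec4 x0 x1 x2 x3 0 o1 = x1
  /\ vec4 x0 x1 x2 x3 0 o2 = x2 /\ vec4 x0 x1 x2 x3 0 o3 = x3.
Proof. by rewrite !mxE. Qed.

Lemma Qxi (F : comNzRingType) (nu a0 a1 b0 b1 c0 c1 x0 x1 y0 y1 : F) :
  Qf (Xi_mat nu a0 a1 b0 b1 c0 c1) (vec4 x0 x1 y0 y1) =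
  (a1 + 1) * (x0 * x0) + x0 * x1 + (a0 + (1 + nu) * a1 + nu) * (x1 * x1)
  + (b1 + 1) * (y0 * y0) + y0 * y1 + (b0 + (1 + nu) * b1 + nu) * (y1 * y1)
  + c1 * (x0 * y0) + (c0 + c1) * (x0 * y1) + (c0 + c1) * (x1 * y0) + (c0 + (1 + nu) * c1) * (x1 * y1).
Proof. rewrite QfE !big_ord_recr !big_ord0 /= !mxE /=; ring. Qed.

Lemma Qq (F : comNzRingType) (a b c d e f x0 x1 x2 x3 : F) :
  Qform a b c d e f (vec4 x0 x1 x2 x3) =
  a * x0 ^+ 2 + b * x1 ^+ 2 + c * x0 * x1 + d * x0 * x3 + e * x1 * x3 + f * x3 ^+ 2 - x2 * x3.
Proof. rewrite -[Qform _ _ _ _ _ _ _]/(Qf _ _) QfE !big_ord_recr !big_ord0 /= !mxE /=; ring. Qed.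

Lemma Hq (F : comNzRingType) q (x0 x1 x2 x3 : F) :
  Hform q (vec4 x0 x1 x2 x3) = x2 ^+ q * x3 + x2 * x3 ^+ q - (x0 ^+ q.+1 + x1 ^+ q.+1).
Proof. by rewrite /Hform !mxE. Qed.

Lemma XiA01 (F : comNzRingType) (nu a0 a1 b0 b1 c0 c1 : F) :
  Xi_mat nu a0 a1 b0 b1 c0 c1 0 1 + Xi_mat nu a0 a1 b0 b1 c0 c1 1 0 = 1.
Proof. by rewrite !mxE /= addr0. Qed.

Lemma keyid (L : comNzRingType) (two0 : (2:L) = 0) (e N A0 A1 B0 B1 C0 C1 x0 x1 y0 y1 : L)
  (hN : N = - (e ^+ 2 + e)) :
  (A1 + 1) * (x0 * x0) + x0 * x1 + (A0 + (1 + N) * A1 + N) * (x1 * x1)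
  + (B1 + 1) * (y0 * y0) + y0 * y1 + (B0 + (1 + N) * B1 + N) * (y1 * y1)
  + C1 * (x0 * y0) + (C0 + C1) * (x0 * y1) + (C0 + C1) * (x1 * y0) + (C0 + (1 + N) * C1) * (x1 * y1)
  = ((A0 + A1 * e) * (x0 + x1 * e) ^+ 2 + (B0 + B1 * e) * (y0 + y1 * e) ^+ 2
       + (C0 + C1 * e) * ((x0 + x1 * e) * (y0 + y1 * e)))
  + ((A0 + A1 * (e + 1)) * (x0 + x1 * (e + 1)) ^+ 2 + (B0 + B1 * (e + 1)) * (y0 + y1 * (e + 1)) ^+ 2
       + (C0 + C1 * (e + 1)) * ((x0 + x1 * (e + 1)) * (y0 + y1 * (e + 1))))
  + (x0 + x1 * e) * (x0 + x1 * (e + 1)) + (y0 + y1 * e) * (y0 + y1 * (e + 1)).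
Proof.
set RHS := (X in _ = X).
have E : RHS = RHS + 2 * (- (2 * A1 * x1 * x1 * e * e) + - (2 * A1 * x1 * x1 * e) + - (1 * x1 * x1 * e * e) + - (1 * x1 * x1 * e) + - (2 * B1 * y1 * y1 * e * e) + - (2 * B1 * y1 * y1 * e) + - (1 * y1 * y1 * e * e) + - (1 * y1 * y1 * e) + - (2 * C1 * x1 * y1 * e * e) + - (2 * C1 * x1 * y1 * e) + - (1 * A0 * x0 * x0) + - (2 * A0 * x0 * x1 * e) + - (1 * A0 * x1 * x1 * e * e) + - (1 * A1 * x0 * x0 * e) + - (2 * A1 * x0 * x1 * e * e) + - (1 * A1 * x1 * x1 * e * e * e) + - (1 * B0 * y0 * y0) + - (2 * B0 * y0 * y1 * e) + - (1 * B0 * y1 * y1 * e * e) + - (1 * B1 * y0 * y0 * e) + - (2 * B1 * y0 * y1 * e * e) + - (1 * B1 * y1 * y1 * e * e * e) + - (1 * C0 * x0 * y0) + - (1 * C0 * x0 * y1 * e) + - (1 * C0 * x1 * y0 * e) + - (1 * C0 * x1 * y1 * e * e) + - (1 * C1 * x0 * y0 * e) + - (1 * C1 * x0 * y1 * e * e) + - (1 * C1 * x1 * y0 * e * e) + - (1 * C1 * x1 * y1 * e * e * e) + - (1 * A0 * x0 * x1) + - (1 * A0 * x1 * x1 * e) + - (2 * A1 * x0 * x1 * e) + - (1 * A1 * x0 * x1) + - (1 * B0 * y0 * y1) + - (1 * B0 * y1 * y1 * e) + - (2 * B1 * y0 * y1 * e) + - (1 * B1 * y0 * y1) + - (1 *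 C0 * x1 * y1 * e) + - (1 * C1 * x0 * y1 * e) + - (1 * C1 * x1 * y0 * e) + - (1 * x0 * x1 * e) + - (1 * y0 * y1 * e)) by rewrite two0 mul0r addr0.
rewrite E /RHS hN; ring.
Qed.

Lemma mulE1 (K : comNzRingType) n (L : 'rV[K]_n) (v : 'cV[K]_n) : (L *m v) 0 0 = \sum_k L 0 k * v k 0.
Proof. by rewrite mxE. Qed.

Lemma lin_delta (K : comNzRingType) n (X : 'rV[K]_n) a b i j :
  (X *m (a *: (delta_mx i 0 : 'M[K]_(n,1)) + b *: delta_mx j 0)) 0 0 = a * X 0 i + b * X 0 j.
Proof. by rewrite mulmxDr -!scalemxAr -!colE !mxE. Qed.

Lemma two_planes_gen (K : fieldType) (A : 'M[K]_4) (two0 : (2:K) = 0)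
  (hA01 : A 0 1 + A 1 0 = 1)
  (M : 'M[K]_4) (Mu : M \in unitmx) (hn : qf_nvars (qf_change M A) = 2%N)
  (hdec : forall v, exists u w, Qf A u = 0 /\ Qf A w = 0 /\ v = u + w) :
  qf_two_planes A.
Proof.
set B := qf_change M A.
set N := invmx M.
have hQB v : Qf A v = Qf B (v *m N).
  by rewrite /Qf /bil /B /qf_change -[in LHS](mulmxKV Mu v) trmx_mul !mulmxA.
move: hn; rewrite /qf_nvars; set S := [set _ | _] => /eqP /cards2P [k1 [k2 [k12 hS]]].
have hzero k i j : k != k1 -> k != k2 -> (i == k) || (j == k) -> qf_coef B i j = 0.
  move=> n1 n2 hij; apply/eqP; apply/negPn/negP => hc.
  have : k \in S by rewrite inE; apply/existsP; exists i; apply/existsP; exists j; rewrite hij hc.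
  by rewrite hS !inE (negbTE n1) (negbTE n2).
pose l1 (v : 'rV[K]_4) := (v *m N) 0 k1.
pose l2 (v : 'rV[K]_4) := (v *m N) 0 k2.
have ent (w : 'rV[K]_4) m : (w 0 k1 *: delta_mx 0 k1 + w 0 k2 *: delta_mx 0 k2) 0 m
    = if (m == k1) || (m == k2) then w 0 m else 0.
  rewrite !mxE /=.
  case: (eqVneq m k1) => [->|h1]; first by rewrite (negbTE k12) mulr1 mulr0 addr0.
  case: (eqVneq m k2) => [->|h2] /=; first by rewrite mulr1 mulr0 add0r.
  by rewrite !mulr0 addr0.
have hpi w : Qf B w = Qf B (w 0 k1 *: delta_mx 0 k1 + w 0 k2 *: delta_mx 0 k2).
  rewrite !Qf_coef; apply: eq_bigr => i _; apply: eq_bigr => j _.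
  rewrite !ent; case: ifP => hi; case: ifP => hj //.
  - move/negbT: hj; rewrite negb_or => /andP[j1 j2].
    by rewrite (hzero j i j j1 j2) ?eqxx ?orbT // !mul0r.
  - move/negbT: hi; rewrite negb_or => /andP[i1 i2].
    by rewrite (hzero i i j i1 i2) ?eqxx // !mul0r.
  - move/negbT: hi; rewrite negb_or => /andP[i1 i2].
    by rewrite (hzero i i j i1 i2) ?eqxx // !mul0r.
set al := Qf B (delta_mx 0 k1).
set be := bil B (delta_mx 0 k1) (delta_mx 0 k2) + bil B (delta_mx 0 k2) (delta_mx 0 k1).
set ga := Qf B (delta_mx 0 k2).
have hG v : Qf A v = al * l1 v ^+ 2 + be * l1 v * l2 v + ga * l2 v ^+ 2.
  by rewrite hQB hpi Qf_lin /al /be /ga -/(l1 v) -/(l2 v); ring.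
have l1D u w : l1 (u + w) = l1 u + l1 w by rewrite /l1 mulmxDl mxE.
have l2D u w : l2 (u + w) = l2 u + l2 w by rewrite /l2 mulmxDl mxE.
have [[v0 [hv0 hnz]] | hno] := classic (exists v, Qf A v = 0 /\ (l1 v != 0 \/ l2 v != 0)); last first.
  exfalso.
  have hl v : Qf A v = 0 -> l1 v = 0.
    move=> hv; case: (eqVneq (l1 v) 0) => // h1; exfalso; apply: hno; exists v; split => //; by left.
  have [u [w [hu [hw hv]]]] := hdec (delta_mx 0 k1 *m M).
  have := l1D u w; rewrite -hv (hl _ hu) (hl _ hw) addr0 /l1 mulmxK // mxE !eqxx /=.
  by move/eqP; rewrite oner_eq0.
have [p1 [r1 [p2 [r2 hfac]]]] : exists p1 r1 p2 r2, forall x y,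
    al * x ^+ 2 + be * x * y + ga * y ^+ 2 = (p1 * x + r1 * y) * (p2 * x + r2 * y).
  move: hv0; rewrite hG; set x0 := l1 v0; set y0 := l2 v0 => hv0.
  case: (eqVneq x0 0) => hx0.
  - have hy0 : y0 != 0 by case: hnz => //; rewrite -/x0 hx0 eqxx.
    have hga : ga = 0.
      move: hv0; rewrite hx0 expr0n /= !mulr0 mul0r !add0r => /eqP.
      by rewrite mulf_eq0 expf_eq0 (negbTE hy0) andbF orbF => /eqP.
    exists 1, 0, al, be => x y; rewrite hga; ring.
  - set m := y0 / x0.
    have hm : al + be * m + ga * m ^+ 2 = 0.
      have E : al * x0 ^+ 2 + be * x0 * y0 + ga * y0 ^+ 2 = x0 ^+ 2 * (al + be * m + ga * m ^+ 2).
        rewrite /m; field; exact: hx0.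
      move: hv0; rewrite E => /eqP; rewrite mulf_eq0 expf_eq0 (negbTE hx0) andbF /=.
      by move/eqP.
    exists (- m), 1, (be + ga * m), ga => x y.
    have ha : al = (al + be * m + ga * m ^+ 2) - (be * m + ga * m ^+ 2) by ring.
    rewrite hm sub0r in ha; rewrite ha; ring.
pose L1 : 'rV[K]_4 := (N *m (p1 *: delta_mx k1 0 + r1 *: delta_mx k2 0))^T.
pose L2 : 'rV[K]_4 := (N *m (p2 *: delta_mx k1 0 + r2 *: delta_mx k2 0))^T.
have hL1 (v : 'rV[K]_4) : (v *m L1^T) 0 0 = p1 * l1 v + r1 * l2 v by rewrite trmxK mulmxA lin_delta.
have hL2 (v : 'rV[K]_4) : (v *m L2^T) 0 0 = p2 * l1 v + r2 * l2 v by rewrite trmxK mulmxA lin_delta.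
have hprod v : Qf A v = (v *m L1^T) 0 0 * (v *m L2^T) 0 0 by rewrite hG hfac hL1 hL2.
have hQL v : Qf A v = Qf (L1^T *m L2) v.
  rewrite hprod /Qf /bil mulmxA -[v *m L1^T *m L2 *m v^T]mulmxA [RHS]mxE big_ord1.
  congr (_ * _); rewrite -[v in LHS]trmxK -trmx_mul mxE //.
exists L1, L2; split; last exact: coef_det hQL.
have hLe (L : 'rV[K]_4) j : ((delta_mx 0 j : 'rV[K]_4) *m L^T) 0 0 = L 0 j by rewrite -rowE !mxE.
have hLe2 (L : 'rV[K]_4) : (((delta_mx 0 0 : 'rV[K]_4) + delta_mx 0 1) *m L^T) 0 0 = L 0 0 + L 0 1.
  by rewrite mulmxDl [LHS]mxE !hLe.
have h0 := hprod (delta_mx 0 0).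
have h1 := hprod (delta_mx 0 1).
have h01 := hprod (delta_mx 0 0 + delta_mx 0 1).
rewrite /Qf bil_delta !hLe in h0.
rewrite /Qf bil_delta !hLe in h1.
rewrite Qf_add /Qf !bil_delta hA01 !hLe2 in h01.
have hlin : L1 0 0 * L2 0 1 + L1 0 1 * L2 0 0 = 1.
  have E : L1 0 0 * L2 0 1 + L1 0 1 * L2 0 0 =
    (L1 0 0 + L1 0 1) * (L2 0 0 + L2 0 1) - L1 0 0 * L2 0 0 - L1 0 1 * L2 0 1 by ring.
  by rewrite E -h01 -h0 -h1; ring.
pose c0 : 'M[K]_(4,1) := L2 0 1 *: delta_mx 0 0 + (- L2 0 0) *: delta_mx 1 0.
pose c1 : 'M[K]_(4,1) := (- L1 0 1) *: delta_mx 0 0 + L1 0 0 *: delta_mx 1 0.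
have m11 (X Y : 'M[K]_1) : X 0 0 = Y 0 0 -> X = Y by move=> h; apply/matrixP => i j; rewrite !ord1.
have rf : row_free (col_mx L1 L2).
  apply/row_freeP; exists (row_mx c0 c1).
  rewrite mul_col_row scalar_mx_block.
  congr block_mx; apply: m11; rewrite lin_delta [RHS]mxE /= ?mulr1n ?mulr0n.
  - by rewrite !(two_opp two0) -hlin; ring.
  - ring.
  - ring.
  - by rewrite !(two_opp two0) -hlin; ring.
by move: rf; rewrite /row_free => /eqP.
Qed.


End Aux.
Import Aux.

Theorem lemma5 (h : nat) (h_gt0 : (0 < h)%N)
  (F L : finFieldType) (iota : {rmorphism F -> L})
  (cardF : #|F| = (2 ^ h)%N) (cardL : #|L| = ((2 ^ h) ^ 2)%N)
  (nu : F) (eps : L)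
  (nu_neq1 : nu != 1) (tr_nu : abs_trace h nu = 1)
  (eps_root : eps ^+ 2 + eps + iota nu = 0)
  (eps_notin : forall u : F, eps != iota u)
  (a b c d e f : L) (a0 a1 b0 b1 c0 c1 : F)
  (ha : a = iota a0 + iota a1 * eps)
  (hb : b = iota b0 + iota b1 * eps)
  (hc : c = iota c0 + iota c1 * eps)
  (hQ : qf_hyperbolic (Qmat a b c d e f))
  (hC : union_two_lines (Cinf (2 ^ h) a b c d e f))
  (hrank : qf_rank (Xi_mat nu a0 a1 b0 b1 c0 c1) 2) :
  qf_two_planes (Xi_mat nu a0 a1 b0 b1 c0 c1).
Proof.
have q_gt1 : (1 < 2 ^ h)%N by rewrite -{1}(expn0 2) ltn_exp2l.
have F2 : (2 : F) = 0.
  by have := card_finPcharP cardF (isT : prime 2); move/pcharf0.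
have L2 : (2 : L) = 0 by rewrite -(rmorph_nat iota 2) F2 rmorph0.
have fixF u : iota u ^+ (2 ^ h) = iota u by rewrite -rmorphXn -cardF expf_card.
have oppL := two_opp L2.
pose fd (p : F * F) := iota p.1 + iota p.2 * eps.
have finj : injective fd.
  move=> [u0 u1] [w0 w1]; rewrite /fd /= => H.
  have E : eps * iota (u1 - w1) = iota (w0 - u0) + (iota u0 + iota u1 * eps - (iota w0 + iota w1 * eps)).
    by rewrite !rmorphB; ring.
  rewrite H subrr addr0 in E.
  case: (eqVneq (u1 - w1) 0) => h1.
  - move: E; rewrite h1 rmorph0 mulr0 => /esym/eqP; rewrite fmorph_eq0 subr_eq0 => /eqP ->.
    by move/eqP: h1; rewrite subr_eq0 => /eqP ->.
  - have := eps_notin ((w0 - u0) / (u1 - w1)).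
    by rewrite fmorph_div -E mulfK ?fmorph_eq0 // eqxx.
have fsurj w : exists u0 u1, w = iota u0 + iota u1 * eps.
  have : w \in codom fd.
    by apply: (inj_card_onto finj); rewrite card_prod cardF cardL mulnn.
  by case/codomP => [[u0 u1] ->]; exists u0, u1.
have hy : (eps ^+ (2 ^ h)) ^+ 2 + eps ^+ (2 ^ h) + iota nu = 0.
  have E : (eps ^+ 2 + eps + iota nu) ^+ (2 ^ h) = 0 by rewrite eps_root expr0n expn_eq0.
  by rewrite !(frobD L2) exprAC fixF in E.
have epsq : eps ^+ (2 ^ h) = eps + 1.
  set y := eps ^+ (2 ^ h) in hy *.
  have : (y - eps) * (y + eps + 1) = 0.
    have E2 : (y - eps) * (y + eps + 1) = (y ^+ 2 + y + iota nu) - (eps ^+ 2 + eps + iota nu) by ring.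
    by rewrite E2 hy eps_root subrr.
  move/eqP; rewrite mulf_eq0 => /orP[]; last first.
    move/eqP => h0; have : y = (y + eps + 1) - (eps + 1) by ring.
    by rewrite h0 sub0r oppL.
  rewrite subr_eq0 => /eqP hye; exfalso.
  have hw (w : L) : w ^+ (2 ^ h) = w.
    have [u0 [u1 ->]] := fsurj w.
    by rewrite (frobD L2) exprMn !fixF -/y hye.
  pose p : {poly L} := 'X^(2 ^ h) - 'X.
  have sp : size p = (2 ^ h).+1.
    rewrite /p size_polyDl ?size_polyXn // size_polyN size_polyX; lia.
  have pnz : p != 0 by rewrite -size_poly_eq0 sp.
  have := max_poly_roots pnz _ (enum_uniq L).
  rewrite -cardE cardL sp.
  have -> : all (root p) (enum L).
    by apply/allP => w _; rewrite /root /p !hornerE hw subrr.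
  move=> /(_ isT); rewrite -mulnn; nia.
have conj u0 u1 : (iota u0 + iota u1 * eps) ^+ (2 ^ h) = iota u0 + iota u1 * (eps + 1).
  by rewrite (frobD L2) exprMn !fixF epsq.
have hN : iota nu = - (eps ^+ 2 + eps).
  have E : iota nu = (eps ^+ 2 + eps + iota nu) - (eps ^+ 2 + eps) by ring.
  by rewrite eps_root sub0r in E.
have hS (s : L) (hs : s ^+ (2 ^ h).+1 = 1) (hr : a * s ^+ 2 + c * s + b = 0) x0 x1 y0 y1 :
    iota x0 + iota x1 * eps = s * (iota y0 + iota y1 * eps) ->
    Qf (Xi_mat nu a0 a1 b0 b1 c0 c1) (vec4 x0 x1 y0 y1) = 0.
  move=> hX; apply/eqP; rewrite -(fmorph_eq0 iota) Qxi; apply/eqP.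
  rewrite !(rmorphD, rmorphM, rmorph1).
  rewrite (@keyid _ L2 _ _ _ _ _ _ _ _ _ _ _ _ hN) -!conj -ha -hb -hc hX.
  set Y := iota y0 + iota y1 * eps.
  have hr' : a ^+ (2 ^ h) * (s ^+ (2 ^ h)) ^+ 2 + c ^+ (2 ^ h) * s ^+ (2 ^ h) + b ^+ (2 ^ h) = 0.
    have := congr1 (fun t => t ^+ (2 ^ h)) hr; rewrite /= !(frobD L2) expr0n expn_eq0 /= mulr0n => <-.
    by rewrite !exprMn expr2.
  rewrite !exprMn.
  transitivity (Y ^+ 2 * (a * s ^+ 2 + c * s + b)
      + (Y ^+ (2 ^ h)) ^+ 2 * (a ^+ (2 ^ h) * (s ^+ (2 ^ h)) ^+ 2 + c ^+ (2 ^ h) * s ^+ (2 ^ h) + b ^+ (2 ^ h))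
      + Y * Y ^+ (2 ^ h) * (s ^+ (2 ^ h).+1 - 1) + 2 * (Y * Y ^+ (2 ^ h))).
    by rewrite [s ^+ (2 ^ h).+1]exprS; ring.
  by rewrite hr hr' hs subrr L2; ring.
have hCv (v : 'rV[L]_4) : Cinf (2 ^ h) a b c d e f v ->
    a * (v 0 o0) ^+ 2 + c * (v 0 o0 * v 0 o1) + b * (v 0 o1) ^+ 2 = 0 /\
    (v 0 o0) ^+ (2 ^ h).+1 = (v 0 o1) ^+ (2 ^ h).+1 /\ v 0 o3 = 0.
  case=> vnz v3 hq hh.
  have e3 : (3 : 'I_4) = o3 by apply: val_inj.
  rewrite e3 in v3.
  rewrite (vec4E v) Qq v3 in hq; rewrite (vec4E v) Hq v3 in hh.
  split; first by rewrite -[RHS]hq; ring.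
  split => //.
  rewrite expr0n expn_eq0 /= mulr0n !mulr0 add0r sub0r in hh.
  have E : v 0 o0 ^+ (2 ^ h).+1 = - (- (v 0 o0 ^+ (2 ^ h).+1 + v 0 o1 ^+ (2 ^ h).+1)) - v 0 o1 ^+ (2 ^ h).+1 by ring.
  by rewrite hh oppr0 sub0r oppL in E.
have hx1 (v : 'rV[L]_4) : Cinf (2 ^ h) a b c d e f v -> v 0 o1 = 0 -> v 0 o0 = 0.
  move=> hv h1; have [_ [hh _]] := hCv v hv.
  by move: hh; rewrite h1 expr0n /= => /eqP; rewrite expf_eq0 /= => /eqP.
have hsv (v : 'rV[L]_4) : Cinf (2 ^ h) a b c d e f v -> v 0 o1 != 0 ->
    (v 0 o0 / v 0 o1) ^+ (2 ^ h).+1 = 1 /\ a * (v 0 o0 / v 0 o1) ^+ 2 + c * (v 0 o0 / v 0 o1) + b = 0.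
  move=> hv h1; have [hq [hh _]] := hCv v hv; split.
    by rewrite expr_div_n hh divff // expf_neq0.
  transitivity ((a * (v 0 o0) ^+ 2 + c * (v 0 o0 * v 0 o1) + b * (v 0 o1) ^+ 2) / (v 0 o1) ^+ 2).
    by field.
  by rewrite hq mul0r.
have hext (s : L) : exists v, Cinf (2 ^ h) a b c d e f v /\ v 0 o0 != s * v 0 o1.
  apply: NNPP => hno.
  have hall v : Cinf (2 ^ h) a b c d e f v -> v 0 o0 = s * v 0 o1.
    move=> hv; case: (eqVneq (v 0 o0) (s * v 0 o1)) => // hne; exfalso; apply: hno; by exists v.
  have [U1 [U2 [r1 r2 hne hU]]] := hC.
  pose W : 'M[L]_(1 + 1, 4) := col_mx (vec4 0 0 1 0) (vec4 s 1 0 0).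
  have sub (U : 'M[L]_(2, 4)) : (forall v, v != 0 -> (v <= U)%MS -> Cinf (2 ^ h) a b c d e f v) -> (U <= W)%MS.
    move=> hU'; apply/row_subP => i.
    case: (eqVneq (row i U) 0) => [->|rnz]; first by rewrite sub0mx.
    have hv := hU' _ rnz (row_sub i U).
    have [_ [_ h3]] := hCv _ hv.
    have h0 := hall _ hv.
    apply/submxP; exists (row_mx (row i U 0 o2)%:M (row i U 0 o1)%:M).
    rewrite mul_row_col !mul_scalar_mx vec4_lin {1}[row i U]vec4E h0 h3.
    by congr vec4; ring.
  have s1 := sub U1 (fun v vnz vs => (hU v vnz).2 (or_introl vs)).
  have s2 := sub U2 (fun v vnz vs => (hU v vnz).2 (or_intror vs)).
  have eqW (U : 'M[L]_(2, 4)) : \rank U = 2%N -> (U <= W)%MS -> (W <= U)%MS.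
    move=> rU sUW; have [le eq] := mxrank_leqif_sup sUW.
    rewrite -eq rU; have := rank_leq_row W; move: le; rewrite rU => le1 le2; apply/eqP; lia.
  move/negP: hne; apply; apply/andP; split.
    exact: submx_trans s1 (eqW _ r2 s2).
  exact: submx_trans s2 (eqW _ r1 s1).
have [v1 [hv1 n1]] := hext 0.
have v1nz : v1 0 o1 != 0.
  by apply/eqP => h1; move: n1; rewrite (hx1 _ hv1 h1) mul0r eqxx.
have [hs1 hr1] := hsv _ hv1 v1nz.
set s1 := v1 0 o0 / v1 0 o1 in hs1 hr1.
have [v2 [hv2 n2]] := hext s1.
have v2nz : v2 0 o1 != 0.
  by apply/eqP => h1; move: n2; rewrite (hx1 _ hv2 h1) h1 mulr0 eqxx.
have [hs2 hr2] := hsv _ hv2 v2nz.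
set s2 := v2 0 o0 / v2 0 o1 in hs2 hr2.
have s21 : s2 - s1 != 0.
  rewrite subr_eq0; apply: contraNneq n2 => e21.
  by rewrite -e21 /s2 divfK.
have hdec (v : 'rV[F]_4) : exists u w, Qf (Xi_mat nu a0 a1 b0 b1 c0 c1) u = 0 /\
    Qf (Xi_mat nu a0 a1 b0 b1 c0 c1) w = 0 /\ v = u + w.
  rewrite (vec4E v).
  set X := iota (v 0 o0) + iota (v 0 o1) * eps.
  set Y := iota (v 0 o2) + iota (v 0 o3) * eps.
  pose Y2 := (X - s1 * Y) / (s2 - s1); pose Y1 := Y - Y2.
  have [p0 [p1 hp]] := fsurj Y1; have [r0 [r1 hr]] := fsurj (s1 * Y1).
  exists (vec4 r0 r1 p0 p1), (vec4 (v 0 o0 - r0) (v 0 o1 - r1) (v 0 o2 - p0) (v 0 o3 - p1)).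
  split; first by apply: (hS s1 hs1 hr1); rewrite -hr -hp.
  split; last by rewrite vec4D; congr vec4; ring.
  apply: (hS s2 hs2 hr2); rewrite !rmorphB.
  transitivity (X - (iota r0 + iota r1 * eps)); first by rewrite /X; ring.
  transitivity (s2 * (Y - (iota p0 + iota p1 * eps))); last by rewrite /Y; ring.
  rewrite -hr -hp /Y1 /Y2; field; exact: s21.
have [[M Mu hM] _] := hrank.
exact: (two_planes_gen F2 (XiA01 _ _ _ _ _ _ _) Mu hM hdec).
Qed.
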